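(* Let $g(x)=\left(1+\frac{1}{x}\right)^{x}$ for $x>0$. There is an expansion $g(x)=\sum_{j=0}^{\infty}\frac{c_j}{x^j}$ which converges for $x>1$, where the coefficients $c_j$ are given recursively by $c_0=e$ and $$c_{j+1}=\frac{1}{j+1}\sum_{l=0}^{j}(-1)^{j-l+1}\left(\frac{j-l+1}{j-l+2}\right)c_l\qquad (j=0,1,2,\dots).$$ Moreover, as $j\to\infty$, $$c_j=(-1)^j\left(1+\frac{1}{j}\right)+\mathcal{O}\!\left(\frac{\ln j}{j^2}\right).$$
   Context: Here $e$ is Euler's number. The expansion is the (asymptotic, and in fact convergent) expansion of $g(x)$ in powers of $1/x$ for large $x$; equivalently, $c_j$ are the Maclaurin coefficients of $f(z)=(1+z)^{1/z}=\exp\{z^{-1}\ln(1+z)\}$, with the removable singularity at $z=0$ filled in by $f(0)=e$. *)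

(* Defs.v *)
From Stdlib Require Import Reals.
From Coquelicot Require Import Coquelicot.
Open Scope R_scope.

Definition g (x : R) : R := Rpower (1 + / x) x.

Definition coeff_rec (c : nat -> R) : Prop :=
  c 0%nat = exp 1 /\
  forall j : nat,
    c (S j) = / INR (S j) *
      sum_f_R0 (fun l => (-1) ^ (j - l + 1) *
                         (INR (j - l + 1) / INR (j - l + 2)) * c l) j.

(* Main.v *)
Require Import Defs.
From Stdlib Require Import Reals Lra Lia ZArith.
From Coquelicot Require Import Coquelicot.
Open Scope R_scope.

Lemma rad_lt (a : nat -> R) (B : R) (x : R) :
  (forall n, Rabs (a n) <= B) -> Rabs x < 1 -> Rbar_lt (Rabs x) (CV_radius a).
Proof.
  intros HB Hx.
  apply Rbar_lt_le_trans with (Finite 1); [exact Hx|].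
  destruct (CV_radius_bounded a) as [Hub _].
  apply Hub. exists B. intro n. rewrite pow1, Rmult_1_r. auto.
Qed.

Lemma const_lemma (f : R -> R) :
  (forall x, Rabs x < 1 -> is_derive f x 0) ->
  forall z, Rabs z < 1 -> f z = f 0.
Proof.
  intros Hd z Hz.
  destruct (MVT_gen f 0 z (fun _ => 0)) as [c [_ Hc]].
  - intros x [H1 H2]. apply Hd.
    unfold Rmin, Rmax in *. destruct (Rle_dec 0 z); apply Rabs_def1; 
    apply Rabs_def2 in Hz; lra.
  - intros x [H1 H2]. apply continuity_pt_filterlim.
    apply (ex_derive_continuous f x). exists 0. apply Hd.
    unfold Rmin, Rmax in *. destruct (Rle_dec 0 z); apply Rabs_def1; 
    apply Rabs_def2 in Hz; lra.
  - lra.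
Qed.

Lemma w_bound (m : nat) : 0 <= INR (m + 1) / INR (m + 2) <= 1.
Proof.
  replace (m+2)%nat with (S (m+1)) by lia. rewrite S_INR.
  pose proof (pos_INR (m+1)).
  split. apply Rmult_le_pos; [lra| left; apply Rinv_0_lt_compat; lra].
  apply Rmult_le_reg_r with (INR (m+1) + 1); [lra|].
  unfold Rdiv. rewrite Rmult_assoc, Rinv_l by lra. lra.
Qed.

Lemma pow_m1_abs (n : nat) : Rabs ((-1) ^ n) = 1.
Proof. rewrite <- RPow_abs, Rabs_m1, pow1. reflexivity. Qed.

Lemma c_bound (c : nat -> R) (Hc : coeff_rec c) : forall j, Rabs (c j) <= exp 1.
Proof.
  destruct Hc as [H0 HS].
  assert (forall n j, (j <= n)%nat -> Rabs (c j) <= exp 1).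
  { induction n as [|n IH]; intros j Hj.
    - assert (j = 0%nat) by lia. subst. rewrite H0, Rabs_pos_eq. lra.
      left; apply exp_pos.
    - destruct (Nat.le_gt_cases j n) as [Hjn|Hjn]; [apply IH; lia|].
      assert (j = S n) by lia. subst j. rewrite HS.
      rewrite Rabs_mult, Rabs_inv, Rabs_pos_eq by apply pos_INR.
      apply Rmult_le_reg_l with (INR (S n)). apply lt_0_INR; lia.
      rewrite <- Rmult_assoc, Rinv_r, Rmult_1_l by (apply not_0_INR; lia).
      eapply Rle_trans; [apply sum_f_R0_triangle|].
      eapply Rle_trans with (sum_f_R0 (fun _ => exp 1) n).
      + apply sum_Rle. intros l Hl.
        rewrite !Rabs_mult, pow_m1_abs, Rmult_1_l.
        destruct (w_bound (n-l)) as [W1 W2].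
        rewrite (Rabs_pos_eq _ W1).
        assert (Rabs (c l) <= exp 1) by (apply IH; lia).
        pose proof (Rabs_pos (c l)).
        replace (exp 1) with (1 * exp 1) by ring.
        apply Rmult_le_compat; lra.
      + rewrite sum_cte. lra. }
  intro j. apply (H j j). lia.
Qed.

Definition lc (k : nat) : R := (-1) ^ k / INR (S k).

Lemma lc_bound k : Rabs (lc k) <= 1.
Proof.
  unfold lc, Rdiv. rewrite Rabs_mult, pow_m1_abs, Rabs_inv, Rabs_pos_eq by apply pos_INR.
  rewrite Rmult_1_l. rewrite <- Rinv_1. apply Rinv_le_contravar. lra.
  rewrite S_INR. pose proof (pos_INR k). lra.
Qed.

Lemma deriv_id (c : nat -> R) (Hc : coeff_rec c) :
  forall j, PS_derive c j = PS_mult c (PS_derive lc) j.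
Proof.
  intro j. destruct Hc as [_ HS]. unfold PS_derive, PS_mult. rewrite HS.
  rewrite <- Rmult_assoc, Rinv_r, Rmult_1_l by (apply not_0_INR; lia).
  apply sum_eq. intros l Hl. unfold lc.
  replace (j - l + 1)%nat with (S (j - l)) by lia.
  replace (j - l + 2)%nat with (S (S (j - l))) by lia.
  field. repeat split; apply not_0_INR; lia.
Qed.

Lemma C_exp (c : nat -> R) (Hc : coeff_rec c) :
  forall z, Rabs z < 1 -> PSeries c z = exp (PSeries lc z).
Proof.
  pose proof (c_bound c Hc) as Cb.
  set (Q := fun x => PSeries c x * exp (- PSeries lc x)).
  assert (HQ : forall x, Rabs x < 1 -> is_derive Q x 0).
  { intros x Hx.
    assert (Rc : Rbar_lt (Rabs x) (CV_radius c)) by (eapply rad_lt; eauto).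
    assert (Rl : Rbar_lt (Rabs x) (CV_radius lc)) by (eapply rad_lt; [apply lc_bound|eauto]).
    assert (Rdl : Rbar_lt (Rabs x) (CV_radius (PS_derive lc))) by (rewrite CV_radius_derive; auto).
    pose proof (is_derive_PSeries c x Rc) as D1.
    pose proof (is_derive_PSeries lc x Rl) as D2.
    pose proof (is_derive_opp _ _ _ D2) as D3.
    pose proof (is_derive_comp exp (fun y => opp (PSeries lc y)) x _ _ (is_derive_exp _) D3) as D4.
    pose proof (is_derive_mult _ _ _ _ _ D1 D4 Rmult_comm) as D5.
    unfold Q.
    assert (E : PSeries (PS_derive c) x = PSeries c x * PSeries (PS_derive lc) x).
    { rewrite <- PSeries_mult by auto. apply PSeries_ext. apply deriv_id; auto. }
    rewrite E in D5.
    eapply is_derive_ext; [|].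
    2: { replace 0 with (plus (mult (PSeries c x * PSeries (PS_derive lc) x)
           (exp (opp (PSeries lc x))))
           (mult (PSeries c x) (scal (opp (PSeries (PS_derive lc) x)) (exp (opp (PSeries lc x)))))).
         exact D5.
         unfold plus, mult, scal, opp; simpl. unfold mult; simpl. ring. }
    intro t. reflexivity. }
  intros z Hz.
  pose proof (const_lemma Q HQ z Hz) as E. unfold Q in E.
  rewrite !PSeries_0 in E. destruct Hc as [H0 _]. rewrite H0 in E.
  assert (L0 : lc 0 = 1) by (unfold lc; simpl; field).
  rewrite L0, <- exp_plus, Rplus_opp_r, exp_0 in E.
  apply Rmult_eq_reg_r with (exp (- PSeries lc z)). rewrite E, <- exp_plus.
  replace (PSeries lc z + - PSeries lc z) with 0 by ring. rewrite exp_0. ring.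
  apply Rgt_not_eq, exp_pos.
Qed.
Lemma geom_alt x : Rabs x < 1 -> PSeries (fun n => (-1) ^ n) x = / (1 + x).
Proof.
  intro Hx. apply is_pseries_unique.
  replace (/ (1 + x)) with (/ (1 - - x)) by (f_equal; ring).
  unfold is_pseries. eapply is_series_ext; [|apply (is_series_geom (- x))].
  - intro n. rewrite pow_n_pow. unfold scal; simpl. unfold mult; simpl.
    rewrite <- Rpow_mult_distr. f_equal. ring.
  - rewrite Rabs_Ropp; auto.
Qed.

Lemma log_series z : Rabs z < 1 -> z * PSeries lc z = ln (1 + z).
Proof.
  intro Hz.
  set (h := fun x => PSeries (PS_incr_1 lc) x - ln (1 + x)).
  assert (Hh : forall x, Rabs x < 1 -> is_derive h x 0).
  { intros x Hx.
    assert (Rl : Rbar_lt (Rabs x) (CV_radius (PS_incr_1 lc)))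
      by (rewrite CV_radius_incr_1; eapply rad_lt; [apply lc_bound|eauto]).
    pose proof (is_derive_PSeries _ x Rl) as D1.
    assert (D2 : is_derive (fun y => ln (1 + y)) x (/ (1 + x))).
    { apply Rabs_def2 in Hx. auto_derive. lra. field. lra. }
    pose proof (is_derive_minus _ _ _ _ _ D1 D2) as D3.
    unfold h.
    replace 0 with (minus (PSeries (PS_derive (PS_incr_1 lc)) x) (/ (1 + x))).
    exact D3.
    rewrite (PSeries_ext _ (fun n => (-1) ^ n)).
    rewrite geom_alt by auto. unfold minus, plus, opp; simpl. ring.
    intro n. unfold PS_derive, PS_incr_1, lc. field. apply not_0_INR; lia. }
  pose proof (const_lemma h Hh z Hz) as E. unfold h in E.
  rewrite PSeries_0, PSeries_incr_1 in E. simpl in E.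
  rewrite Rplus_0_r, ln_1 in E. change (zero - 0) with (0 - 0) in E. lra.
Qed.

Lemma part1 (c : nat -> R) (Hc : coeff_rec c) :
  forall x : R, 1 < x -> is_series (fun j => c j / x ^ j) (g x).
Proof.
  intros x Hx.
  assert (Hz : Rabs (/ x) < 1).
  { rewrite Rabs_pos_eq by (left; apply Rinv_0_lt_compat; lra).
    rewrite <- Rinv_1. apply Rinv_lt_contravar; lra. }
  assert (Rc : Rbar_lt (Rabs (/ x)) (CV_radius c)) by (eapply rad_lt; [apply c_bound; auto| auto]).
  pose proof (PSeries_correct _ _ (CV_radius_inside _ _ Rc)) as P.
  rewrite (C_exp c Hc _ Hz) in P.
  assert (E : PSeries lc (/ x) = x * ln (1 + / x)).
  { rewrite <- log_series by auto. field. lra. }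
  rewrite E in P. unfold g, Rpower.
  unfold is_pseries in P. eapply is_series_ext; [|exact P].
  intro n. rewrite pow_n_pow. unfold scal; simpl. unfold mult; simpl.
  rewrite pow_inv. unfold Rdiv. ring.
Qed.


Definition ct (c : nat -> R) (j : nat) : R := (-1) ^ j * c j.
Definition ff (c : nat -> R) (j : nat) : R :=
  match j with 0%nat => ct c 0 | S k => ct c (S k) - ct c k end.
Definition q (m : nat) : R := / INR (S (S m)).

Lemma sign_lemma (j l : nat) : (l <= j)%nat ->
  (-1) ^ (S j) * (-1) ^ (j - l + 1) = (-1) ^ l.
Proof.
  intro Hl. rewrite <- pow_add.
  replace (S j + (j - l + 1))%nat with (l + 2 * (j - l + 1))%nat by lia.
  rewrite pow_add, pow_mult. replace ((-1) ^ 2) with 1 by ring. rewrite pow1. ring.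
Qed.

Lemma ct_rec (c : nat -> R) (Hc : coeff_rec c) (j : nat) :
  INR (S j) * ct c (S j) =
  sum_f_R0 (fun l => ct c l) j - sum_f_R0 (fun l => ct c l * q (j - l)) j.
Proof.
  destruct Hc as [_ HS]. unfold ct at 1. rewrite HS.
  rewrite <- minus_sum.
  replace (INR (S j) * ((-1) ^ S j * (/ INR (S j) *
     sum_f_R0 (fun l => (-1) ^ (j - l + 1) * (INR (j - l + 1) / INR (j - l + 2)) * c l) j)))
   with ((-1) ^ S j * sum_f_R0 (fun l => (-1) ^ (j - l + 1) * (INR (j - l + 1) / INR (j - l + 2)) * c l) j)
   by (field; apply not_0_INR; lia).
  rewrite scal_sum. apply sum_eq. intros l Hl.
  unfold ct, q.
  replace (j - l + 1)%nat with (S (j - l)) by lia.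
  replace (j - l + 2)%nat with (S (S (j - l))) by lia.
  pose proof (sign_lemma j l Hl) as SL.
  replace (j - l + 1)%nat with (S (j - l)) in SL by lia.
  rewrite <- SL. rewrite (S_INR (S (j - l))).
  field. pose proof (pos_INR (S (j - l))). lra.
Qed.

Lemma ff_rec (c : nat -> R) (Hc : coeff_rec c) (j : nat) :
  INR (S j) * ff c (S j) + sum_f_R0 (fun l => ff c l * q (j - l)) j = 0.
Proof.
  destruct j as [|k].
  - pose proof (ct_rec c Hc 0) as R0. simpl in *. unfold q in *. simpl in *. lra.
  - rewrite decomp_sum by lia. simpl pred.
    assert (E : sum_f_R0 (fun i => ff c (S i) * q (S k - S i)) k =
                sum_f_R0 (fun i => ct c (S i) * q (k - i)) k - sum_f_R0 (fun i => ct c i * q (k - i)) k).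
    { rewrite <- minus_sum. apply sum_eq. intros i Hi. simpl. ring. }
    rewrite E. clear E.
    pose proof (ct_rec c Hc (S k)) as R1. pose proof (ct_rec c Hc k) as R2.
    rewrite tech5 in R1.
    rewrite (decomp_sum (fun l => ct c l * q (S k - l))) in R1 by lia. simpl pred in R1.
    replace (S k - 0)%nat with (S k) in R1 by lia.
    assert (E : sum_f_R0 (fun i => ct c (S i) * q (S k - S i)) k = sum_f_R0 (fun i => ct c (S i) * q (k - i)) k)
      by (apply sum_eq; intros; reflexivity).
    rewrite E in R1.
    replace (S k - 0)%nat with (S k) by lia.
    simpl ff. rewrite (S_INR (S k)) in *. lra.
Qed.

Lemma ct_sum (c : nat -> R) (j : nat) : ct c j = sum_f_R0 (ff c) j.
Proof. induction j; simpl; [reflexivity|]. rewrite <- IHj. ring. Qed.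

Fixpoint Hn (n : nat) : R := match n with 0%nat => 0 | S k => Hn k + / INR (S k) end.

Lemma Hn_S n : Hn (S n) = Hn n + / INR (S n).
Proof. reflexivity. Qed.

Lemma sum_rev (a : nat -> R) (j : nat) : sum_f_R0 (fun l => a (j - l)%nat) j = sum_f_R0 a j.
Proof.
  induction j as [|j IH]; [reflexivity|].
  rewrite decomp_sum by lia. simpl pred. rewrite tech5.
  replace (S j - 0)%nat with (S j) by lia.
  assert (E : sum_f_R0 (fun i => a (S j - S i)%nat) j = sum_f_R0 (fun i => a (j - i)%nat) j)
    by (apply sum_eq; intros; reflexivity).
  rewrite E, IH. ring.
Qed.

Lemma harm_sum j : sum_f_R0 (fun l => / INR (S l)) j = Hn (S j).
Proof. induction j; [simpl; ring|]. rewrite tech5, IHj. reflexivity. Qed.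

Lemma Hn_pos n : 0 <= Hn n.
Proof.
  induction n; [simpl; lra|]. rewrite Hn_S. pose proof (pos_INR n).
  assert (0 < / INR (S n)) by (apply Rinv_0_lt_compat; apply lt_0_INR; lia). lra.
Qed.

Lemma Hn_ge1 n : (1 <= n)%nat -> 1 <= Hn n.
Proof.
  intro Hn1. induction n; [lia|]. destruct n.
  - rewrite Hn_S. simpl. lra.
  - assert (1 <= Hn (S n)) by (apply IHn; lia). rewrite (Hn_S (S n)).
    assert (0 < / INR (S (S n))) by (apply Rinv_0_lt_compat; apply lt_0_INR; lia). 
    lra.
Qed.

Lemma Hn_le n : Hn n <= INR n.
Proof.
  induction n; [simpl; lra|]. rewrite Hn_S, S_INR.
  assert (/ INR (S n) <= 1).
  { rewrite <- Rinv_1. apply Rinv_le_contravar; [lra|]. rewrite S_INR. pose proof (pos_INR n). lra. }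
  rewrite S_INR in H. lra.
Qed.

Lemma Hbig k : 8 * Hn (16 + k) <= INR (16 + k) / 2 + 120.
Proof.
  induction k.
  - pose proof (Hn_le 16). replace (16 + 0)%nat with 16%nat by lia.
    replace (INR 16) with 16 in * by (simpl; ring). lra.
  - replace (16 + S k)%nat with (S (16 + k)) by lia. rewrite Hn_S.
    rewrite !(S_INR (16 + k)).
    assert (8 * / (INR (16 + k) + 1) <= 1 / 2).
    { rewrite plus_INR. replace (INR 16) with 16 by (simpl; ring).
      pose proof (pos_INR k).
      apply Rmult_le_reg_r with (16 + INR k + 1); [lra|].
      field_simplify; lra. }
    lra.
Qed.

Lemma Sj_bound j :
  sum_f_R0 (fun l => / (INR (S l) * INR (S (S (j - l))))) j <= 2 * Hn (S j) / (INR j + 3).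
Proof.
  rewrite (sum_eq _ (fun l => (/ INR (S l) + / INR (S (S (j - l)))) * / (INR j + 3))).
  2: { intros l Hl. rewrite !S_INR, minus_INR by lia.
       pose proof (pos_INR l). pose proof (pos_INR j).
       assert (INR l <= INR j) by (apply le_INR; lia).
       field. lra. }
  rewrite <- (scal_sum (fun l => (/ INR (S l) + / INR (S (S (j - l)))))), plus_sum.
  rewrite (sum_rev (fun m => / INR (S (S m))) j).
  rewrite harm_sum.
  assert (sum_f_R0 (fun m => / INR (S (S m))) j <= sum_f_R0 (fun m => / INR (S m)) j).
  { apply sum_Rle. intros m _. apply Rinv_le_contravar. apply lt_0_INR; lia.
    apply le_INR; lia. }
  rewrite harm_sum in H.
  pose proof (pos_INR j).
  unfold Rdiv. rewrite (Rmult_comm (2 * Hn (S j))).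
  apply Rmult_le_compat_l. left; apply Rinv_0_lt_compat; lra. lra.
Qed.

Lemma decompA (c : nat -> R) (Hc : coeff_rec c) (j : nat) :
  INR (S j) * ff c (S j) =
  - ct c j * q j - sum_f_R0 (fun l => ff c l * (q (j - l) - q j)) j.
Proof.
  pose proof (ff_rec c Hc j) as R.
  assert (E : sum_f_R0 (fun l => ff c l * q (j - l)) j =
    sum_f_R0 (fun l => ff c l * (q (j - l) - q j)) j + ct c j * q j).
  { rewrite ct_sum, (Rmult_comm (sum_f_R0 _ _)), scal_sum, <- plus_sum. apply sum_eq. intros; ring. }
  lra.
Qed.

Lemma termA (M : R) (l j : nat) : 0 <= M -> (l <= j)%nat ->
  0 <= q (j - l) - q j /\
  M / INR (S l) ^ 2 * (q (j - l) - q j) <=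
  M / (INR j + 2) * / (INR (S l) * INR (S (S (j - l)))).
Proof.
  intros HM Hl. unfold q. rewrite !S_INR, minus_INR by lia.
  assert (Hab : INR l <= INR j) by (apply le_INR; lia).
  pose proof (pos_INR l).
  set (a := INR l) in *. set (b := INR j) in *.
  assert (E1 : / (b - a + 1 + 1) - / (b + 1 + 1) = a / ((b - a + 2) * (b + 2))) by (field; lra).
  rewrite E1. split.
  - apply Rmult_le_pos; [lra|]. left; apply Rinv_0_lt_compat. nra.
  - assert (E2 : M / (a + 1) ^ 2 * (a / ((b - a + 2) * (b + 2))) =
       (M / (b + 2) * / ((a + 1) * (b - a + 1 + 1))) * (a / (a + 1))) by (field; lra).
    rewrite E2. rewrite <- (Rmult_1_r (M / (b + 2) * / ((a + 1) * (b - a + 1 + 1)))) at 2.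
    apply Rmult_le_compat_l.
    + apply Rmult_le_pos. apply Rmult_le_pos; [lra|left; apply Rinv_0_lt_compat; lra].
      left; apply Rinv_0_lt_compat; nra.
    + apply Rmult_le_reg_r with (a + 1); [lra|]. unfold Rdiv.
      rewrite Rmult_assoc, Rinv_l by lra. lra.
Qed.

Lemma le_sum (a : nat -> R) (n N : nat) : (forall i, 0 <= a i) -> (n <= N)%nat ->
  a n <= sum_f_R0 a N.
Proof.
  intros Ha HnN. induction N.
  - assert (n = 0%nat) by lia. subst. simpl. lra.
  - destruct (Nat.eq_dec n (S N)).
    + subst. rewrite tech5. pose proof (cond_pos_sum a N Ha). lra.
    + rewrite tech5. pose proof (Ha (S N)). assert (a n <= sum_f_R0 a N) by (apply IHN; lia). lra.
Qed.

Lemma ct_bound (c : nat -> R) (Hc : coeff_rec c) j : Rabs (ct c j) <= exp 1.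
Proof. unfold ct. rewrite Rabs_mult, pow_m1_abs, Rmult_1_l. apply c_bound; auto. Qed.

Lemma stepA (c : nat -> R) (Hc : coeff_rec c) :
  exists M, 0 < M /\ forall n, Rabs (ff c n) <= M / INR (S n) ^ 2.
Proof.
  set (M := 4 * exp 1 + sum_f_R0 (fun l => Rabs (ff c l) * INR (S l) ^ 2) 241).
  assert (Hpos : forall l, 0 <= Rabs (ff c l) * INR (S l) ^ 2).
  { intro l. apply Rmult_le_pos; [apply Rabs_pos| apply pow2_ge_0]. }
  pose proof (cond_pos_sum _ 241 Hpos) as Hs.
  pose proof (exp_pos 1) as He.
  assert (HM : 0 < M) by (unfold M; lra).
  exists M. split; [exact HM|].
  assert (Hsq : forall n, 0 < INR (S n) ^ 2) by (intro n; apply pow_lt, lt_0_INR; lia).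
  assert (forall N n, (n <= N)%nat -> Rabs (ff c n) <= M / INR (S n) ^ 2).
  { induction N as [|N IH]; intros n Hnn.
    - assert (Hn0 : n = 0%nat) by lia. subst n.
      apply Rmult_le_reg_r with (INR 1 ^ 2); [apply Hsq|].
      unfold Rdiv. rewrite Rmult_assoc, Rinv_l by (apply Rgt_not_eq, Hsq). rewrite Rmult_1_r.
      pose proof (le_sum _ 0 241 Hpos ltac:(lia)). unfold M. lra.
    - destruct (Nat.le_gt_cases n N) as [HnN|HnN]; [apply IH; lia|].
      assert (Hn' : n = S N) by lia. subst n.
      destruct (Nat.le_gt_cases (S N) 241) as [Hsmall|Hbig'].
      + apply Rmult_le_reg_r with (INR (S (S N)) ^ 2); [apply Hsq|].
        unfold Rdiv. rewrite Rmult_assoc, Rinv_l by (apply Rgt_not_eq, Hsq). rewrite Rmult_1_r.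
        pose proof (le_sum _ (S N) 241 Hpos Hsmall). unfold M. lra.
      + set (j := N) in *.
        assert (Hfl : forall l, (l <= j)%nat -> Rabs (ff c l) <= M / INR (S l) ^ 2)
          by (intros; apply IH; lia).
        pose proof (decompA c Hc j) as D.
        assert (B1 : Rabs (sum_f_R0 (fun l => ff c l * (q (j - l) - q j)) j) <=
             M / (INR j + 2) * (2 * Hn (S j) / (INR j + 3))).
        { eapply Rle_trans; [apply sum_f_R0_triangle|].
          eapply Rle_trans; [|apply Rmult_le_compat_l; [left; apply Rdiv_lt_0_compat; 
             [lra| pose proof (pos_INR j); lra]| apply Sj_bound]].
          rewrite scal_sum. apply sum_Rle. intros l Hl.
          destruct (termA M l j (Rlt_le _ _ HM) Hl) as [T1 T2].
          rewrite Rabs_mult, (Rabs_pos_eq _ T1).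
          eapply Rle_trans; [|rewrite Rmult_comm; exact T2].
          apply Rmult_le_compat_r; auto. }
        assert (B2 : 2 * Hn (S j) / (INR j + 3) <= 1 / 4).
        { pose proof (Hbig (j - 15)) as HB. replace (16 + (j - 15))%nat with (S j) in HB by lia.
          rewrite S_INR in HB. pose proof (pos_INR j).
          assert (240 <= INR j) by (replace 240 with (INR 240) by (simpl; ring); apply le_INR; lia).
          apply Rmult_le_reg_r with (INR j + 3); [lra|]. unfold Rdiv.
          rewrite Rmult_assoc, Rinv_l by lra. lra. }
        pose proof (ct_bound c Hc j) as Cb.
        assert (Hq : q j = / (INR j + 2)) by (unfold q; rewrite !S_INR; f_equal; ring).
        pose proof (pos_INR j) as Hj0.
        assert (B3 : INR (S j) * Rabs (ff c (S j)) <= exp 1 / (INR j + 2) + M / (INR j + 2) * (1/4)).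
        { rewrite <- (Rabs_pos_eq (INR (S j))) by apply pos_INR.
          rewrite <- Rabs_mult, D.
          eapply Rle_trans; [apply Rabs_triang|]. rewrite Rabs_Ropp.
          apply Rplus_le_compat.
          - rewrite Rabs_mult, Rabs_Ropp, Hq, (Rabs_pos_eq (/ (INR j + 2))) by (left; apply Rinv_0_lt_compat; lra).
            unfold Rdiv. apply Rmult_le_compat_r; [left; apply Rinv_0_lt_compat; lra| auto].
          - eapply Rle_trans; [exact B1|]. apply Rmult_le_compat_l; [|auto].
            left; apply Rdiv_lt_0_compat; lra. }
        rewrite !S_INR in *.
        apply Rmult_le_reg_l with (INR j + 1); [lra|].
        eapply Rle_trans; [exact B3|].
        replace (INR j + 1 + 1) with (INR j + 2) by ring.
        apply Rmult_le_reg_r with ((INR j + 2) ^ 2); [nra|].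
        field_simplify; [|lra|lra].
        assert (4 * exp 1 <= M) by (unfold M; lra). nra. }
  intro n. apply (H n n). lia.
Qed.

Lemma archi_nat (r : R) : exists N : nat, r < INR N.
Proof.
  destruct (archimed r) as [H1 _].
  destruct (Z_le_gt_dec 0 (up r)) as [Hz|Hz].
  - exists (Z.to_nat (up r)). rewrite INR_IZR_INZ, Z2Nat.id by lia. lra.
  - exists 0%nat. simpl. apply Rlt_trans with (IZR (up r)); [lra|].
    apply IZR_lt. lia.
Qed.

Lemma ff_tel (c : nat -> R) (M : R) : 0 <= M ->
  (forall n, Rabs (ff c n) <= M / INR (S n) ^ 2) ->
  forall j n, Rabs (ct c (n + j) - ct c j) <= M * (/ INR (S j) - / INR (S (n + j))).
Proof.
  intros HM Hf j n. induction n.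
  - simpl. rewrite Rminus_diag, Rabs_R0. lra.
  - replace (ct c (S n + j)) with (ct c (n + j) + ff c (S (n + j))) by (simpl; ring).
    replace (ct c (n + j) + ff c (S (n + j)) - ct c j) with ((ct c (n + j) - ct c j) + ff c (S (n + j))) by ring.
    eapply Rle_trans; [apply Rabs_triang|].
    pose proof (Hf (S (n + j))) as Hf1.
    assert (E : M / INR (S (S (n + j))) ^ 2 <= M * (/ INR (S (n + j)) - / INR (S (S n + j)))).
    { replace (S n + j)%nat with (S (n + j)) by lia.
      rewrite !S_INR. pose proof (pos_INR (n + j)).
      set (x := INR (n + j)) in *.
      replace (/ (x + 1) - / (x + 1 + 1)) with (/ ((x + 1) * (x + 2))) by (field; lra).
      unfold Rdiv. apply Rmult_le_compat_l; auto.
      apply Rinv_le_contravar; nra. }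
    assert (E2 : M * (/ INR (S j) - / INR (S (n + j))) + M * (/ INR (S (n + j)) - / INR (S (S n + j)))
       = M * (/ INR (S j) - / INR (S (S n + j)))) by ring.
    lra.
Qed.

Lemma stepB (c : nat -> R) (M : R) : 0 < M ->
  (forall n, Rabs (ff c n) <= M / INR (S n) ^ 2) ->
  exists l : R, is_lim_seq (ct c) l /\ forall j, Rabs (ct c j - l) <= M / INR (S j).
Proof.
  intros HM Hf.
  pose proof (ff_tel c M (Rlt_le _ _ HM) Hf) as T.
  assert (T2 : forall j n, Rabs (ct c (n + j) - ct c j) <= M / INR (S j)).
  { intros j n. eapply Rle_trans; [apply T|]. unfold Rdiv.
    apply Rmult_le_compat_l; [lra|].
    assert (0 < / INR (S (n + j))) by (apply Rinv_0_lt_compat, lt_0_INR; lia). lra. }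
  assert (Cau : ex_lim_seq_cauchy (ct c)).
  { intro eps. destruct (archi_nat (2 * M / eps)) as [N HN].
    exists N. intros n m Hn Hm.
    pose proof (T2 N (n - N)%nat) as A1. pose proof (T2 N (m - N)%nat) as A2.
    replace (n - N + N)%nat with n in A1 by lia. replace (m - N + N)%nat with m in A2 by lia.
    assert (M / INR (S N) < eps / 2).
    { rewrite S_INR. pose proof (cond_pos eps).
      apply Rmult_lt_reg_r with (INR N + 1). pose proof (pos_INR N); lra.
      unfold Rdiv. rewrite Rmult_assoc, Rinv_l by (pose proof (pos_INR N); lra).
      apply Rmult_lt_reg_l with (2 / eps). apply Rdiv_lt_0_compat; lra.
      replace (2 / eps * (eps * / 2 * (INR N + 1))) with (INR N + 1) by (field; lra).
      replace (2 / eps * (M * 1)) with (2 * M / eps) by (field; lra). lra. }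
    replace (ct c n - ct c m) with ((ct c n - ct c N) - (ct c m - ct c N)) by ring.
    eapply Rle_lt_trans; [apply Rabs_triang|]. rewrite Rabs_Ropp. lra. }
  apply ex_lim_seq_cauchy_corr in Cau. destruct Cau as [l Hl].
  exists l. split; auto.
  intro j.
  assert (L1 : is_lim_seq (fun n => Rabs (ct c (n + j) - ct c j)) (Rabs (l - ct c j))).
  { apply (is_lim_seq_abs _ (Finite (l - ct c j))).
    apply is_lim_seq_minus'. apply (is_lim_seq_incr_n (ct c) j l). auto.
    apply is_lim_seq_const. }
  pose proof (is_lim_seq_le _ _ _ _ (T2 j) L1 (is_lim_seq_const (M / INR (S j)))) as L2.
  simpl in L2. rewrite Rabs_minus_sym. exact L2.
Qed.

Lemma series_le (a b : nat -> R) (la lb : R) :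
  is_series a la -> is_series b lb -> (forall n, Rabs (a n) <= b n) -> Rabs la <= lb.
Proof.
  intros Ha Hb Hab.
  assert (La : is_lim_seq (sum_n a) la) by exact Ha.
  assert (Lb : is_lim_seq (sum_n b) lb) by exact Hb.
  apply is_lim_seq_abs in La.
  assert (Hle : forall n, Rabs (sum_n a n) <= sum_n b n).
  { intro n. rewrite !sum_n_Reals. eapply Rle_trans; [apply sum_f_R0_triangle|].
    apply sum_Rle. intros; auto. }
  exact (is_lim_seq_le _ _ _ _ Hle La Lb).
Qed.

Lemma exp_sq_bound (k : R) : 0 < k -> k ^ 2 / 4 <= exp k.
Proof.
  intro Hk. replace (exp k) with (exp (k / 2 + k / 2)) by (f_equal; field). rewrite exp_plus.
  pose proof (exp_ineq1_le (k / 2)). nra.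
Qed.

Lemma abel_step (c : nat -> R) (Hc : coeff_rec c) (M l : R) : 0 < M ->
  (forall j, Rabs (ct c j - l) <= M / INR (S j)) -> l = 1.
Proof.
  intros HM Hl.
  assert (Key : forall t, 0 < t < 1 ->
     Rabs (exp (PSeries lc (- t)) - l / (1 - t)) <= M * PSeries lc (- t)).
  { intros t Ht.
    assert (Hz : Rabs (- t) < 1) by (rewrite Rabs_Ropp, Rabs_pos_eq; lra).
    assert (Rc : Rbar_lt (Rabs (- t)) (CV_radius c)) by (eapply rad_lt; [apply c_bound; auto| auto]).
    assert (Rl : Rbar_lt (Rabs (- t)) (CV_radius lc)) by (eapply rad_lt; [apply lc_bound| auto]).
    pose proof (PSeries_correct _ _ (CV_radius_inside _ _ Rc)) as P1.
    rewrite (C_exp c Hc _ Hz) in P1.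
    pose proof (PSeries_correct _ _ (CV_radius_inside _ _ Rl)) as P4.
    assert (Hg : is_series (fun n => t ^ n) (/ (1 - t))) by (apply is_series_geom; rewrite Rabs_pos_eq; lra).
    pose proof (is_series_scal l _ _ Hg) as P2.
    pose proof (is_series_minus _ _ _ _ P1 P2) as P3.
    pose proof (is_series_scal M _ _ P4) as P5.
    assert (Hsq : forall n, (-1) ^ n * (-1) ^ n = 1).
    { intro n. rewrite <- Rpow_mult_distr. replace (-1 * -1) with 1 by ring. apply pow1. }
    assert (Hpt : forall n, (- t) ^ n = (-1) ^ n * t ^ n).
    { intro n. rewrite <- Rpow_mult_distr. f_equal. ring. }
    eapply (series_le _ _ _ _ P3 P5).
    intro n. unfold plus, opp, scal, mult; simpl. unfold mult; simpl.
    rewrite !pow_n_pow, Hpt.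
    replace ((-1) ^ n * t ^ n * c n + - (l * t ^ n)) with ((ct c n - l) * t ^ n)
      by (unfold ct; ring).
    unfold lc.
    replace (M * ((-1) ^ n * t ^ n * ((-1) ^ n / INR (S n))))
      with (M / INR (S n) * t ^ n) by (replace (M * ((-1) ^ n * t ^ n * ((-1) ^ n / INR (S n)))) with (M * ((-1) ^ n * (-1) ^ n) * t ^ n / INR (S n)) by (field; apply not_0_INR; lia); rewrite Hsq; field; apply not_0_INR; lia).
    rewrite Rabs_mult, (Rabs_pos_eq (t ^ n)) by (apply pow_le; lra).
    apply Rmult_le_compat_r; [apply pow_le; lra| auto]. }
  assert (Bnd : forall k, 16 <= k -> Rabs (1 - l) <= 8 * (M + 2) / k).
  { intros k Hk.
    set (u := exp (- k)). set (t := 1 - u).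
    assert (Hu0 : 0 < u) by apply exp_pos.
    assert (Hek : exp k * u = 1) by (unfold u; rewrite <- exp_plus, Rplus_opp_r; apply exp_0).
    pose proof (exp_sq_bound k ltac:(lra)) as Ek.
    assert (Hu4 : u <= 4 / k ^ 2).
    { apply Rmult_le_reg_l with (k ^ 2 / 4). nra.
      replace (k ^ 2 / 4 * (4 / k ^ 2)) with 1 by (field; lra). nra. }
    assert (Hu1 : u <= 1 / 2).
    { eapply Rle_trans; [exact Hu4|]. apply Rmult_le_reg_r with (k ^ 2); [nra|].
      unfold Rdiv. rewrite Rmult_assoc, Rinv_l by nra. nra. }
    assert (Ht : 0 < t < 1) by (unfold t; lra).
    pose proof (Key t Ht) as K1.
    assert (Lm : PSeries lc (- t) = k / t).
    { assert (Hz : Rabs (- t) < 1) by (rewrite Rabs_Ropp, Rabs_pos_eq; lra).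
      pose proof (log_series (- t) Hz) as LS.
      replace (1 + - t) with u in LS by (unfold t; ring).
      unfold u in LS. rewrite ln_exp in LS.
      apply Rmult_eq_reg_l with (- t); [|lra]. rewrite LS. field. lra. }
    rewrite Lm in K1.
    set (a := k * u / t).
    assert (Ha0 : 0 <= a) by (unfold a; apply Rmult_le_pos; [nra| left; apply Rinv_0_lt_compat; lra]).
    assert (Ha8 : a <= 8 / k).
    { assert (Hat : a * t = k * u) by (unfold a; field; lra).
      assert (Ht2 : 1 / 2 <= t) by (unfold t; lra).
      assert (0 <= a * (2 * t - 1)) by (apply Rmult_le_pos; lra).
      assert (a <= 2 * k * u) by nra.
      apply Rle_trans with (2 * k * (4 / k ^ 2)). 
      apply Rle_trans with (2 * k * u); [lra|]. apply Rmult_le_compat_l; nra.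
      right. field. lra. }
    assert (Ha1 : a <= 1 / 2).
    { eapply Rle_trans; [exact Ha8|]. apply Rmult_le_reg_r with k; [lra|].
      unfold Rdiv. rewrite Rmult_assoc, Rinv_l by lra. lra. }
    assert (Ea : exp a = u * exp (k / t)).
    { unfold u. rewrite <- exp_plus. f_equal. unfold a, t. field. unfold u in *. lra. }
    assert (K2 : Rabs (exp a - l) <= M * a).
    { rewrite Ea. replace (u * exp (k / t) - l) with (u * (exp (k / t) - l / (1 - t)))
        by (unfold t; field; lra).
      rewrite Rabs_mult, Rabs_pos_eq by lra.
      replace (M * a) with (u * (M * (k / t))) by (unfold a; field; lra).
      apply Rmult_le_compat_l; lra. }
    assert (E1 : 1 <= exp a) by (pose proof (exp_ineq1_le a); lra).
    assert (E2 : exp a <= 1 + 2 * a).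
    { pose proof (exp_ineq1_le (- a)) as Em.
      assert (exp a * exp (- a) = 1) by (rewrite <- exp_plus, Rplus_opp_r; apply exp_0).
      pose proof (exp_pos a). nra. }
    replace (1 - l) with ((exp a - l) - (exp a - 1)) by ring.
    eapply Rle_trans; [apply Rabs_triang|]. rewrite Rabs_Ropp, (Rabs_pos_eq (exp a - 1)) by lra.
    apply Rle_trans with ((M + 2) * a); [lra|].
    replace (8 * (M + 2) / k) with ((M + 2) * (8 / k)) by (field; lra).
    apply Rmult_le_compat_l; lra. }
  destruct (Req_dec (Rabs (1 - l)) 0) as [E|E].
  - apply Rabs_eq_0 in E. lra.
  - exfalso. pose proof (Rabs_pos (1 - l)) as P.
    set (d := Rabs (1 - l)) in *.
    pose proof (Bnd (16 + 16 * (M + 2) / d)) as B.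
    assert (0 < 16 * (M + 2) / d) by (apply Rdiv_lt_0_compat; lra).
    specialize (B ltac:(lra)).
    assert (8 * (M + 2) / (16 + 16 * (M + 2) / d) < d).
    { apply Rmult_lt_reg_r with (16 + 16 * (M + 2) / d); [lra|].
      unfold Rdiv at 1. rewrite Rmult_assoc, Rinv_l by lra.
      replace (d * (16 + 16 * (M + 2) / d)) with (16 * d + 16 * (M + 2)) by (field; lra).
      nra. }
    lra.
Qed.

Definition V (m : nat) : R := (Hn m + 1) / (INR m * INR (S m)).

Lemma Vdiff (m : nat) : (1 <= m)%nat ->
  Hn (S m) / (INR (S m) ^ 2 * INR (S (S m))) <= V m - V (S m).
Proof.
  intro Hm. unfold V. rewrite Hn_S. rewrite !S_INR.
  assert (Ha : 1 <= INR m) by (replace 1 with (INR 1) by reflexivity; apply le_INR; lia).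
  pose proof (Hn_pos m) as Hh.
  set (a := INR m) in *. set (h := Hn m) in *.
  assert (E : (h + 1) / (a * (a + 1)) - (h + / (a + 1) + 1) / ((a + 1) * (a + 1 + 1))
     - (h + / (a + 1)) / ((a + 1) ^ 2 * (a + 1 + 1))
     = (h * a + 2 * h + a + 2 - a / (a + 1)) / (a * (a + 1) ^ 2 * (a + 2))) by (field; lra).
  assert (0 <= (h * a + 2 * h + a + 2 - a / (a + 1)) / (a * (a + 1) ^ 2 * (a + 2))).
  { apply Rmult_le_pos; [|left; apply Rinv_0_lt_compat; apply Rmult_lt_0_compat; [nra|lra]].
    assert (a / (a + 1) <= 1).
    { apply Rmult_le_reg_r with (a + 1); [lra|]. unfold Rdiv.
      rewrite Rmult_assoc, Rinv_l by lra. lra. }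
    nra. }
  lra.
Qed.

Lemma R_bound (c : nat -> R) (M : R) : 0 <= M ->
  (forall n, Rabs (ff c n) <= M / INR (S n) ^ 2) -> forall j,
  Rabs (sum_f_R0 (fun l => ff c l * (q (j - l) - q j)) j) <=
             M / (INR j + 2) * (2 * Hn (S j) / (INR j + 3)).
Proof.
  intros HM Hf j. pose proof (pos_INR j).
  eapply Rle_trans; [apply sum_f_R0_triangle|].
  eapply Rle_trans; [|apply Rmult_le_compat_l; [apply Rmult_le_pos; [lra| left; apply Rinv_0_lt_compat; lra]
       | apply Sj_bound]].
  rewrite scal_sum. apply sum_Rle. intros l Hl.
  destruct (termA M l j HM Hl) as [T1 T2].
  rewrite Rabs_mult, (Rabs_pos_eq _ T1).
  eapply Rle_trans; [|rewrite Rmult_comm; exact T2].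
  apply Rmult_le_compat_r; auto.
Qed.

Lemma stepC_term (c : nat -> R) (Hc : coeff_rec c) (M : R) : 0 <= M ->
  (forall n, Rabs (ff c n) <= M / INR (S n) ^ 2) ->
  (forall j, Rabs (ct c j - 1) <= M / INR (S j)) ->
  forall m, (1 <= m)%nat ->
  Rabs (ff c (S m) + / (INR (S m) * INR (S (S m)))) <= 3 * M * (V m - V (S m)).
Proof.
  intros HM Hf Hct m Hm.
  pose proof (Vdiff m Hm) as Vd.
  pose proof (R_bound c M HM Hf m) as RB.
  pose proof (decompA c Hc m) as D.
  pose proof (Hct m) as HX.
  pose proof (Hn_ge1 (S m) ltac:(lia)) as H1.
  assert (Ha : 1 <= INR m) by (replace 1 with (INR 1) by reflexivity; apply le_INR; lia).
  set (R := sum_f_R0 (fun l => ff c l * (q (m - l) - q m)) m) in *.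
  set (X := ct c m - 1) in *.
  assert (Hq : q m = / (INR m + 2)) by (unfold q; rewrite !S_INR; f_equal; ring).
  rewrite Hq in D. rewrite !S_INR in *.
  set (a := INR m) in *. set (H' := Hn (S m)) in *.
  set (Z := ff c (S m) + / ((a + 1) * (a + 1 + 1))).
  assert (EZ : Z * ((a + 1) * (a + 2)) = - X - R * (a + 2)).
  { unfold Z, X. replace (ct c m) with (ct c m) by reflexivity.
    apply Rmult_eq_reg_l with 1; [|lra].
    replace (ff c (S m)) with ((- ct c m * / (a + 2) - R) / (a + 1)) by (rewrite <- D; field; lra).
    field. lra. }
  assert (HX' : Rabs X * (a + 1) <= M).
  { apply Rmult_le_reg_r with (/ (a + 1)). apply Rinv_0_lt_compat; lra.
    rewrite Rmult_assoc, Rinv_r, Rmult_1_r by lra. exact HX. }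
  assert (HR' : Rabs R * ((a + 2) * (a + 3)) <= 2 * M * H').
  { assert (E : M / (a + 2) * (2 * H' / (a + 3)) = 2 * M * H' / ((a + 2) * (a + 3))) by (field; lra).
    rewrite E in RB.
    apply Rmult_le_reg_r with (/ ((a + 2) * (a + 3))). apply Rinv_0_lt_compat; nra.
    rewrite Rmult_assoc, Rinv_r, Rmult_1_r by nra. exact RB. }
  assert (HZ : Rabs Z * ((a + 1) * (a + 2)) <= Rabs X + Rabs R * (a + 2)).
  { rewrite <- (Rabs_pos_eq ((a + 1) * (a + 2))) by nra. rewrite <- Rabs_mult, EZ.
    rewrite <- (Rabs_pos_eq (a + 2)) at 2 by lra. rewrite <- Rabs_mult.
    eapply Rle_trans; [apply Rabs_triang|]. rewrite !Rabs_Ropp. lra. }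
  assert (Main : Rabs Z * ((a + 1) ^ 2 * (a + 2)) <= 3 * M * H').
  { assert (Rabs Z * ((a + 1) ^ 2 * (a + 2)) <= (Rabs X + Rabs R * (a + 2)) * (a + 1)).
    { replace (Rabs Z * ((a + 1) ^ 2 * (a + 2))) with (Rabs Z * ((a + 1) * (a + 2)) * (a + 1)) by ring.
      apply Rmult_le_compat_r; lra. }
    assert (Rabs R * (a + 2) * (a + 1) <= Rabs R * ((a + 2) * (a + 3))).
    { pose proof (Rabs_pos R). nra. }
    nra. }
  apply Rle_trans with (3 * M * (H' / ((a + 1) ^ 2 * (a + 1 + 1)))).
  - apply Rmult_le_reg_r with ((a + 1) ^ 2 * (a + 2)); [nra|].
    replace (3 * M * (H' / ((a + 1) ^ 2 * (a + 1 + 1))) * ((a + 1) ^ 2 * (a + 2))) with (3 * M * H')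
      by (field; lra).
    exact Main.
  - apply Rmult_le_compat_l; [lra|]. exact Vd.
Qed.

Lemma V_pos m : (1 <= m)%nat -> 0 <= V m.
Proof.
  intro Hm. unfold V. pose proof (Hn_pos m).
  apply Rmult_le_pos; [lra|]. left; apply Rinv_0_lt_compat.
  apply Rmult_lt_0_compat; apply lt_0_INR; lia.
Qed.

Lemma stepC_tel (c : nat -> R) (Hc : coeff_rec c) (M : R) : 0 <= M ->
  (forall n, Rabs (ff c n) <= M / INR (S n) ^ 2) ->
  (forall j, Rabs (ct c j - 1) <= M / INR (S j)) ->
  forall j n, (1 <= j)%nat ->
  Rabs (ct c (n + j) - ct c j + / INR (S j) - / INR (S (n + j))) <= 3 * M * (V j - V (n + j)).
Proof.
  intros HM Hf Hct j n Hj. induction n.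
  - change (0 + j)%nat with j. replace (ct c j - ct c j + / INR (S j) - / INR (S j)) with 0 by ring.
    replace (V j - V j) with 0 by ring. rewrite Rabs_R0. lra.
  - pose proof (stepC_term c Hc M HM Hf Hct (n + j) ltac:(lia)) as T.
    replace (S n + j)%nat with (S (n + j)) by lia.
    set (k := (n + j)%nat) in *.
    replace (ct c (S k) - ct c j + / INR (S j) - / INR (S (S k)))
      with ((ct c k - ct c j + / INR (S j) - / INR (S k)) + (ff c (S k) + / (INR (S k) * INR (S (S k)))))
      by (change (ff c (S k)) with (ct c (S k) - ct c k); rewrite !S_INR; pose proof (pos_INR k); pose proof (pos_INR j); field; repeat split; lra).
    eapply Rle_trans; [apply Rabs_triang|]. lra.
Qed.

Lemma Hn_ln n : (1 <= n)%nat -> Hn n <= 1 + ln (INR n).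
Proof.
  intro Hn1. induction n; [lia|]. destruct n.
  - rewrite Hn_S. simpl. rewrite ln_1. lra.
  - rewrite (Hn_S (S n)). specialize (IHn ltac:(lia)).
    assert (Hpos : 0 < INR (S n)) by (apply lt_0_INR; lia).
    assert (Hpos2 : 0 < INR (S (S n))) by (apply lt_0_INR; lia).
    pose proof (exp_ineq1_le (ln (INR (S n) / INR (S (S n))))) as E.
    rewrite exp_ln in E by (apply Rdiv_lt_0_compat; lra).
    rewrite ln_div in E by lra.
    assert (INR (S n) / INR (S (S n)) = 1 - / INR (S (S n))).
    { rewrite (S_INR (S n)). field. lra. }
    lra.
Qed.

Lemma inv_lim (j : nat) : is_lim_seq (fun n => / INR (S (n + j))) 0.
Proof.
  apply is_lim_seq_ext with (fun n => / INR (n + S j)).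
  - intro n. f_equal. f_equal. lia.
  - replace (Finite 0) with (Rbar_inv p_infty) by reflexivity.
    apply is_lim_seq_inv. apply (is_lim_seq_incr_n INR (S j) p_infty). apply is_lim_seq_INR.
    discriminate.
Qed.

Theorem mainTheorem1 (c : nat -> R) (Hc : coeff_rec c) :
  (forall x : R, 1 < x -> is_series (fun j => c j / x ^ j) (g x)) /\
  (exists (K : R) (N : nat), forall j : nat, (N <= j)%nat ->
     Rabs (c j - (-1) ^ j * (1 + / INR j)) <= K * (ln (INR j) / INR j ^ 2)).
Proof.
  split; [apply part1; auto|].
  destruct (stepA c Hc) as [M [HM Hf]].
  destruct (stepB c M HM Hf) as [l [Hlim Hbd]].
  pose proof (abel_step c Hc M l HM Hbd) as Hl1. rewrite Hl1 in Hbd. assert (Hlim1 : is_lim_seq (ct c) 1) by (rewrite <- Hl1; exact Hlim).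
  exists (9 * M + 1), 3%nat. intros j Hj.
  assert (HC : Rabs (1 - ct c j + / INR (S j)) <= 3 * M * V j).
  { pose proof (stepC_tel c Hc M (Rlt_le _ _ HM) Hf Hbd j) as T.
    assert (L1 : is_lim_seq (fun n => Rabs (ct c (n + j) - ct c j + / INR (S j) - / INR (S (n + j))))
                   (Rabs (1 - ct c j + / INR (S j) - 0))).
    { apply (is_lim_seq_abs _ (Finite (1 - ct c j + / INR (S j) - 0))).
      apply is_lim_seq_minus'; [|apply inv_lim].
      apply is_lim_seq_plus'; [|apply is_lim_seq_const].
      apply is_lim_seq_minus'; [|apply is_lim_seq_const].
      apply (is_lim_seq_incr_n (ct c) j 1). exact Hlim1. }
    assert (Hle : forall n, Rabs (ct c (n + j) - ct c j + / INR (S j) - / INR (S (n + j))) <= 3 * M * V j).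
    { intro n. eapply Rle_trans; [apply T; lia|].
      pose proof (V_pos (n + j) ltac:(lia)). nra. }
    pose proof (is_lim_seq_le _ _ _ _ Hle L1 (is_lim_seq_const _)) as L2.
    simpl in L2. rewrite Rminus_0_r in L2. exact L2. }
  assert (Hj1 : 3 <= INR j) by (replace 3 with (INR 3) by (simpl; ring); apply le_INR; lia).
  assert (Hln : 1 <= ln (INR j)).
  { rewrite <- ln_exp with 1. apply ln_le. apply exp_pos. pose proof exp_le_3. lra. }
  pose proof (Hn_ln j ltac:(lia)) as Hh.
  assert (Hcj : c j = (-1) ^ j * ct c j).
  { unfold ct. rewrite <- Rmult_assoc, <- Rpow_mult_distr. replace (-1 * -1) with 1 by ring.
    rewrite pow1. ring. }
  rewrite Hcj, <- Rmult_minus_distr_l, Rabs_mult, pow_m1_abs, Rmult_1_l.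
  unfold V in HC. rewrite S_INR in *.
  set (a := INR j) in *. set (h := Hn j) in *.
  replace (ct c j - (1 + / a)) with (- (1 - ct c j + / (a + 1)) - / (a * (a + 1))) by (field; lra).
  eapply Rle_trans; [apply Rabs_triang|]. rewrite !Rabs_Ropp.
  rewrite (Rabs_pos_eq (/ (a * (a + 1)))) by (left; apply Rinv_0_lt_compat; nra).
  apply Rle_trans with ((3 * M * (h + 1) + 1) / (a * (a + 1))).
  { replace ((3 * M * (h + 1) + 1) / (a * (a + 1))) with (3 * M * ((h + 1) / (a * (a + 1))) + / (a * (a + 1))) by (field; lra). lra. }
  apply Rle_trans with ((3 * M * (h + 1) + 1) / (a * a)).
  { apply Rmult_le_compat_l. pose proof (Hn_pos j). fold h in H. nra.
    apply Rinv_le_contravar; nra. }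
  apply Rmult_le_reg_r with (a * a); [nra|].
  replace ((3 * M * (h + 1) + 1) / (a * a) * (a * a)) with (3 * M * (h + 1) + 1) by (field; lra).
  replace ((9 * M + 1) * (ln a / a ^ 2) * (a * a)) with ((9 * M + 1) * ln a) by (field; lra).
  nra.
Qed.
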